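(* Let $p$ be a prime and $e > 0$. The distinct elementary divisors of $A_{p^e}$ are $p^i$ for $0 \le i \le e$, and the multiplicity of $p^i$ among the elementary divisors is $\phi(p^{e-i})$.
   Context: For a positive integer $k$, let $\Phi_d$ denote the $d$th cyclotomic polynomial and let $\Psi_k : \mathbf{Z}[X]/(X^k-1) \to \bigoplus_{d \mid k} \mathbf{Z}[X]/(\Phi_d(X))$ be the natural map $f \bmod (X^k-1) \mapsto \bigoplus_{d\mid k} f \bmod \Phi_d(X)$. Endow $\mathbf{Z}[X]/(X^k-1)$ with the basis $(1, \overline{X}, \dots, \overline{X}^{k-1})$, each $\mathbf{Z}[X]/(\Phi_d(X))$ with the basis $(1, \overline{X}, \dots, \overline{X}^{\phi(d)-1})$, and order the summands by increasing $d$. $A_k$ is the $k\times k$ integer matrix of $\Psi_k$ with respect to these bases. Elementary divisors are those of the Smith normal form over $\mathbf{Z}$, taken non-negative; $\phi$ is Euler's totient function. *)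

(* Defs.v *)
From mathcomp Require Import all_boot all_order all_algebra all_field.
Set Implicit Arguments. Unset Strict Implicit. Unset Printing Implicit Defensive.
Import GRing.Theory Num.Theory.
Local Open Scope ring_scope.

(* Row index bookkeeping: the codomain  (+)_{d | k} Z[X]/(Phi_d)  has the
   concatenated basis, summands ordered by increasing d (divisors k is the
   increasing list of divisors), each summand with basis 1, X, ..., X^{phi d - 1}.
   [locate s r] returns (d, t): global row r is the t-th basis vector of the
   summand for d. *)
Fixpoint locate (s : seq nat) (r : nat) : nat * nat :=
  match s with
  | [::] => (0%N, 0%N)
  | d :: s' => if (r < totient d)%N then (d, r) else locate s' (r - totient d)
  end.

(* A_k : column j = coordinates of Psi_k(X^j) = (X^j mod Phi_d)_{d | k}.
   'Phi_d is mathcomp's integral cyclotomic polynomial (monic), so %% is the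
   genuine Euclidean remainder in Z[X]. *)
Definition A_mat (k : nat) : 'M[int]_k :=
  \matrix_(i < k, j < k)
    (('X^j %% 'Phi_((locate (divisors k) i).1)) `_ (locate (divisors k) i).2).

Definition is_elem_divisors (n : nat) (M : 'M[int]_n) (d : seq int) : Prop :=
  [/\ size d = n, all (fun x => 0 <= x) d, sorted (fun a b => (a %| b)%Z) d &
   exists2 L : 'M[int]_n, L \in unitmx &
   exists2 R : 'M[int]_n, R \in unitmx &
     M = L *m (\matrix_(i, j) (d`_i *+ (i == j :> nat))) *m R].

(* Main.v *)
Require Import Defs.
From mathcomp Require Import all_boot all_order all_algebra all_field.
From mathcomp Require Import zify.
Set Implicit Arguments. Unset Strict Implicit. Unset Printing Implicit Defensive.
Import GRing.Theory Num.Theory.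
Local Open Scope ring_scope.

Lemma locate_cat (s1 s2 : seq nat) r :
  locate (s1 ++ s2) r = if (r < sumn (map totient s1))%N then locate s1 r
                        else locate s2 (r - sumn (map totient s1)).
Proof.
elim: s1 r => [|d s IH] r /=; first by rewrite subn0.
case: ifP => h1; first by rewrite ifT //; apply: leq_trans h1 (leq_addr _ _).
rewrite IH subnDA; case: ifP => h2; case: ifP => h3 //; lia.
Qed.

Lemma locate_in (s : seq nat) r : (r < sumn (map totient s))%N ->
  (locate s r).1 \in s /\ ((locate s r).2 < totient (locate s r).1)%N.
Proof.
elim: s r => [|d s IH] r //=; case: ifP => h1 h2; first by rewrite mem_head.
have [h3 h4] := IH (r - totient d)%N ltac:(lia).
by rewrite in_cons h3 orbT.
Qed.

Section Aux.
Variable p : nat.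
Hypothesis pP : prime p.

Lemma p_gt1 : (1 < p)%N. Proof. exact: prime_gt1. Qed.
Lemma p_gt0 : (0 < p)%N. Proof. exact: prime_gt0. Qed.
Lemma pe_gt0 e : (0 < p ^ e)%N. Proof. by rewrite expn_gt0 p_gt0. Qed.

Definition dp (e : nat) := [seq (p ^ i)%N | i <- iota 0 e.+1].

Lemma divisors_pe e : divisors (p ^ e) = dp e.
Proof.
apply: (irr_sorted_eq ltn_trans ltnn (sorted_divisors_ltn _)).
  rewrite /dp sorted_map; apply: sub_sorted (iota_ltn_sorted 0 e.+1) => a b /=.
  by rewrite ltn_exp2l // p_gt1.
move=> x; rewrite -dvdn_divisors ?pe_gt0 //.
apply/dvdn_pfactor/mapP => // -[m].
  by move=> hm ->; exists m => //; rewrite mem_iota.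
by rewrite mem_iota => /andP[_ hm] ->; exists m.
Qed.

Lemma dpS e : dp e.+1 = dp e ++ [:: (p ^ e.+1)%N].
Proof. by rewrite /dp -addn1 iotaD map_cat. Qed.

Lemma sum_tot e : sumn (map totient (dp e)) = (p ^ e)%N.
Proof.
elim: e => [|e IH]; first by rewrite /dp /= expn0.
rewrite dpS map_cat sumn_cat IH /= addn0 totient_pfactor //.
rewrite expnS /=; have := p_gt0; case: p => // q _ /=; lia.
Qed.

End Aux.

Definition aa (k i j : nat) : int :=
  (('X^j %% 'Phi_((locate (divisors k) i).1)) `_ (locate (divisors k) i).2).

Lemma A_matE k (i j : 'I_k) : A_mat k i j = aa k i j.
Proof. by rewrite /A_mat mxE. Qed.

Lemma ulPhi d : lead_coef ('Phi_d) \in GRing.unit.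
Proof. by rewrite (monicP (Cyclotomic_monic d)) unitr1. Qed.

Lemma mod_red (d n j : nat) (w : {poly int}) : 'X^n - 1 = w * 'Phi_d ->
  'X^j %% 'Phi_d = 'X^(j %% n) %% 'Phi_d.
Proof.
move=> h.
have -> : 'X^j = ('X^(j %% n) * ((\sum_(i < j %/ n) ('X^n)^+i) * w)) * 'Phi_d
               + 'X^(j %% n) :> {poly int}.
  rewrite -!mulrA -h (mulrC (\sum_(i < _) _)) -subrX1 mulrBr mulr1 subrK.
  by rewrite -exprM -exprD {1}(divn_eq j n) addnC mulnC.
by rewrite (Pdiv.IdomainUnit.modpD (ulPhi d)) modp_mull add0r.
Qed.

Lemma sum_delta (m n a t : nat) : (a < n)%N -> (t < m * n)%N ->
  \sum_(b < m) (((t == a + b * n)%N)%:R : int) = (((t %% n)%N == a)%:R).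
Proof.
move=> ha ht; have n0 : (0 < n)%N by lia.
case: eqP => h.
  have hb : (t %/ n < m)%N by rewrite ltn_divLR.
  rewrite (bigD1 (Ordinal hb)) //= big1 ?addr0.
    by rewrite {1}(divn_eq t n) h addnC eqxx.
  move=> b hb'; case: eqP => // ht'; exfalso; move/eqP: hb'; apply.
  by apply: val_inj => /=; rewrite ht' addnC divnMDl // divn_small // addn0.
rewrite big1 // => b _; case: eqP => // ht'; exfalso; apply: h.
by rewrite ht' addnC modnMDl modn_small.
Qed.

Lemma sum_ord_last (F : nat -> {poly int}) m : (0 < m)%N ->
  \sum_(b < m) F b = \sum_(b < m.-1) F b + F m.-1.
Proof. by case: m => // m _; rewrite big_ord_recr. Qed.

Section Aux2.
Variable p : nat.
Hypothesis pP : prime p.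

Lemma Phi_pe e : 'Phi_(p ^ e.+1) = \sum_(b < p) 'X^(b * p ^ e) :> {poly int}.
Proof.
have h := prod_Cyclotomic (pe_gt0 pP e.+1).
rewrite (divisors_pe pP) dpS big_cat big_seq1 /= -(divisors_pe pP) in h.
rewrite prod_Cyclotomic ?(pe_gt0 pP) // in h.
have h2 : ('X^(p ^ e) - 1) * \sum_(b < p) 'X^(b * p ^ e) = 'X^(p ^ e.+1) - 1
   :> {poly int}.
  rewrite (eq_bigr (fun b : 'I_p => ('X^(p ^ e)) ^+ b)); last first.
    by move=> b _; rewrite -exprM mulnC.
  by rewrite -subrX1 -exprM expnS mulnC.
apply: (mulfI (x := 'X^(p ^ e) - 1)); last by rewrite h h2.
by rewrite -size_poly_eq0 size_Xn_sub_1 ?(pe_gt0 pP).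
Qed.

Lemma aa_top e i j : (i < p ^ e)%N -> aa (p ^ e.+1) i j = aa (p ^ e) i (j %% p ^ e).
Proof.
move=> hi; rewrite /aa (divisors_pe pP e.+1) dpS locate_cat (sum_tot pP) hi.
rewrite -(divisors_pe pP); congr (_ `_ _).
set d := (locate _ _).1.
have [hd _] := @locate_in (divisors (p ^ e)) i
  ltac:(by rewrite (divisors_pe pP) (sum_tot pP)).
have h := prod_Cyclotomic (pe_gt0 pP e).
rewrite (bigD1_seq d hd (divisors_uniq _)) /= mulrC in h.
by rewrite (mod_red j (esym h)).
Qed.

Lemma aa_bot e i j : (p ^ e <= i < p ^ e.+1)%N -> (j < p ^ e.+1)%N ->
  aa (p ^ e.+1) i j =
  if (j < totient (p ^ e.+1))%N then (((i - p ^ e)%N == j)%:R)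
  else - ((((i - p ^ e) %% p ^ e)%N == (j - totient (p ^ e.+1))%N)%:R).
Proof.
move=> /andP[hi1 hi2] hj.
have tot : totient (p ^ e.+1) = (p.-1 * p ^ e)%N by rewrite totient_pfactor.
have pS : p = p.-1.+1 by have := p_gt0 pP; lia.
have hpe : (p ^ e.+1 = p.-1 * p ^ e + p ^ e)%N by rewrite expnS {1}pS mulSn addnC.
rewrite /aa (divisors_pe pP e.+1) dpS locate_cat (sum_tot pP) ifF; last by lia.
rewrite /= ifT; last by lia.
set t := (i - p ^ e)%N; set n := (p ^ e)%N.
have ht : (t < p.-1 * n)%N by rewrite /t /n; lia.
case: ifP => hjr.
  by rewrite modp_small ?coefXn // size_polyXn size_Cyclotomic.
set a := (j - totient (p ^ e.+1))%N.
have ja : j = (a + p.-1 * n)%N by rewrite /a tot /n; lia.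
have ha : (a < n)%N by rewrite /a /n; lia.
have hm : - \sum_(b < p.-1) 'X^(a + b * n) = 'X^j %% 'Phi_(p ^ e.+1) :> {poly int}.
  apply: (Pdiv.IdomainUnit.modpP (ulPhi _) (q := 'X^a)).
    rewrite (Phi_pe e) (sum_ord_last (fun b => 'X^(b * p ^ e)) (p_gt0 pP)) mulrDr mulr_sumr -exprD -ja.
    rewrite addrAC (eq_bigr (fun b : 'I_p.-1 => 'X^(a + b * n))); last first.
      by move=> b _; rewrite -exprD.
    by rewrite subrr add0r.
  rewrite size_polyN size_Cyclotomic ltnS.
  apply: leq_trans (size_sum _ _ _) _; apply/bigmax_leqP => b _.
  rewrite size_polyXn tot -/n.
  have hb : (b.+1 * n <= p.-1 * n)%N by rewrite leq_mul2r ltn_ord orbT.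
  rewrite mulSn in hb; lia.
rewrite -hm coefN coef_sum.
rewrite (eq_bigr (fun b : 'I_p.-1 => (((t == a + b * n)%N)%:R : int))); last first.
  by move=> b _; rewrite coefXn.
by rewrite sum_delta.
Qed.

End Aux2.

Definition diagl n (d : seq int) : 'M[int]_n :=
  \matrix_(i, j) (d`_i *+ (i == j :> nat)).
Definition Idm m1 m2 : 'M[int]_(m1, m2) := \matrix_(i, j) ((i == j :> nat)%:R).

Definition mequiv m1 m2 n1 n2 (M : 'M[int]_(m1,m2)) (N : 'M[int]_(n1,n2)) : Prop :=
  exists L : 'M[int]_(m1,n1), exists L' : 'M[int]_(n1,m1),
  exists R : 'M[int]_(n2,m2), exists R' : 'M[int]_(m2,n2),
  [/\ L *m L' = 1%:M, L' *m L = 1%:M, R *m R' = 1%:M, R' *m R = 1%:M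
    & M = L *m N *m R].

Lemma mequiv_refl m1 m2 (M : 'M[int]_(m1,m2)) : mequiv M M.
Proof. by exists 1%:M, 1%:M, 1%:M, 1%:M; rewrite !mulmx1 mul1mx. Qed.

Lemma mequiv_sym m1 m2 n1 n2 (M : 'M[int]_(m1,m2)) (N : 'M[int]_(n1,n2)) :
  mequiv M N -> mequiv N M.
Proof.
move=> [L [L' [R [R' [h1 h2 h3 h4 ->]]]]].
exists L', L, R', R; split=> //.
by rewrite !mulmxA h2 mul1mx -mulmxA h3 mulmx1.
Qed.

Lemma mequiv_trans m1 m2 n1 n2 k1 k2 (M : 'M[int]_(m1,m2)) (N : 'M[int]_(n1,n2))
  (P : 'M[int]_(k1,k2)) : mequiv M N -> mequiv N P -> mequiv M P.
Proof.
move=> [L [L' [R [R' [h1 h2 h3 h4 ->]]]]] [K [K' [S [S' [g1 g2 g3 g4 ->]]]]].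
exists (L *m K), (K' *m L'), (S *m R), (R' *m S'); split.
- by rewrite mulmxA -(mulmxA L) g1 mulmx1 h1.
- by rewrite mulmxA -(mulmxA K') h2 mulmx1 g2.
- by rewrite mulmxA -(mulmxA S) h3 mulmx1 g3.
- by rewrite mulmxA -(mulmxA R') g4 mulmx1 h4.
by rewrite !mulmxA.
Qed.

Lemma Idm1 m : Idm m m = 1%:M.
Proof. by apply/matrixP => i j; rewrite !mxE. Qed.

Lemma Idm_cast m1 m2 n1 n2 (e1 : m1 = n1) (e2 : m2 = n2) (N : 'M[int]_(n1,n2)) :
  Idm m1 n1 *m N *m Idm n2 m2 = castmx (esym e1, esym e2) N.
Proof.
case: n1 / e1 N; case: n2 / e2 => N.
by rewrite !Idm1 mul1mx mulmx1 castmx_id.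
Qed.

Lemma Idm_inv m1 n1 (e : m1 = n1) : Idm m1 n1 *m Idm n1 m1 = 1%:M.
Proof. by case: n1 / e; rewrite Idm1 mulmx1. Qed.

Lemma mequiv_cast m1 m2 n1 n2 (e1 : m1 = n1) (e2 : m2 = n2) (N : 'M[int]_(n1,n2)) :
  mequiv (castmx (esym e1, esym e2) N) N.
Proof.
exists (Idm m1 n1), (Idm n1 m1), (Idm n2 m2), (Idm m2 n2); split.
- exact: Idm_inv.
- exact: Idm_inv (esym e1).
- exact: Idm_inv (esym e2).
- exact: Idm_inv.
by rewrite (Idm_cast e1 e2).
Qed.

Lemma mequiv_block r m1 m2 (B : 'M[int]_m1) (C : 'M[int]_m2) :
  mequiv B C -> mequiv (block_mx (1%:M : 'M[int]_r) 0 0 B) (block_mx (1%:M : 'M[int]_r) 0 0 C).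
Proof.
move=> [L [L' [R [R' [h1 h2 h3 h4 ->]]]]].
exists (block_mx 1%:M 0 0 L), (block_mx 1%:M 0 0 L'), (block_mx 1%:M 0 0 R),
  (block_mx 1%:M 0 0 R'); split;
  rewrite !mulmx_block !(mulmx0, mul0mx, mulmx1, mul1mx, addr0, add0r) ?h1 ?h2 ?h3 ?h4
    -?scalar_mx_block //.
Qed.

Lemma block_fact n r (c : int) (B : 'M[int]_n) (P : 'M[int]_(n, r)) :
  P *m P^T = (c - 1)%:M ->
  block_mx (B *m P) B 1%:M (- P^T) =
  block_mx 1%:M (B *m P) 0 1%:M *m (block_mx 0 1%:M 1%:M 0 *m block_mx 1%:M 0 0 (c *: B))
    *m block_mx 1%:M (- P^T) 0 1%:M.
Proof.
move=> hP.
rewrite !mulmx_block ?mulmx0 ?mul0mx ?mulmx1 ?mul1mx ?addr0 ?add0r.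
rewrite ?mulmx0 ?mul0mx ?mulmx1 ?mul1mx ?addr0 ?add0r.
congr block_mx.
by rewrite mulmxN -mulmxA hP mul_mx_scalar scalerBl scale1r opprB subrK.
Qed.

Lemma blk_swap m1 m2 : (block_mx 0 1%:M 1%:M 0 : 'M[int]_(m1+m2, m2+m1)) *m
   block_mx 0 1%:M 1%:M 0 = 1%:M.
Proof.
by rewrite !mulmx_block !(mulmx0, mul0mx, mulmx1, mul1mx, addr0, add0r)
   -scalar_mx_block.
Qed.

Lemma blk_ut m1 m2 (X : 'M[int]_(m1,m2)) :
  block_mx 1%:M X 0 1%:M *m block_mx 1%:M (-X) 0 1%:M = 1%:M.
Proof.
by rewrite !mulmx_block !(mulmx0, mul0mx, mulmx1, mul1mx, addr0, add0r) ?addrN ?addNr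
   -scalar_mx_block.
Qed.

Lemma blk_ut' m1 m2 (X : 'M[int]_(m1,m2)) :
  block_mx 1%:M (-X) 0 1%:M *m block_mx 1%:M X 0 1%:M = 1%:M.
Proof. by rewrite -{2}(opprK X) blk_ut. Qed.

Lemma mequiv_M0 n r (c : int) (B : 'M[int]_n) (P : 'M[int]_(n, r)) :
  P *m P^T = (c - 1)%:M ->
  mequiv (block_mx (B *m P) B 1%:M (- P^T)) (block_mx (1%:M : 'M_r) 0 0 (c *: B)).
Proof.
move=> hP; rewrite (block_fact B hP).
exists (block_mx 1%:M (B *m P) 0 1%:M *m block_mx 0 1%:M 1%:M 0),
  (block_mx 0 1%:M 1%:M 0 *m block_mx 1%:M (- (B *m P)) 0 1%:M),
  (block_mx 1%:M (- P^T) 0 1%:M), (block_mx 1%:M P^T 0 1%:M); split;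
  last by rewrite !mulmxA.
- by rewrite mulmxA -(mulmxA _ (block_mx 0 _ _ 0)) blk_swap mulmx1 blk_ut.
- by rewrite mulmxA -(mulmxA (block_mx 0 _ _ 0)) blk_ut' mulmx1 blk_swap.
- exact: blk_ut'.
- exact: blk_ut.
Qed.

Definition Pm n r : 'M[int]_(n, r) := \matrix_(a, t) ((((t %% n)%N == a)%:R)).

Lemma mulPm m n r (M : 'M[int]_(m, n)) (n0 : (0 < n)%N) i (t : 'I_r) :
  (M *m Pm n r) i t = M i (Ordinal (ltn_pmod t n0)).
Proof.
rewrite mxE (bigD1 (Ordinal (ltn_pmod t n0))) //= mxE eqxx mulr1 big1 ?addr0 //.
move=> a ha; rewrite mxE; case: eqP => [h|]; last by rewrite mulr0.
by exfalso; move/eqP: ha; apply; apply: val_inj; rewrite /= h.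
Qed.

Lemma sum_eq1 N x : (x < N)%N -> \sum_(t < N) (((t == x :> nat))%:R : int) = 1.
Proof.
move=> hx; rewrite (bigD1 (Ordinal hx)) //= eqxx big1 ?addr0 //.
move=> t ht; case: eqP => // h; exfalso; move/eqP: ht; apply; exact: val_inj.
Qed.

Lemma sum_mod m n a : (a < n)%N ->
  \sum_(t < m * n) ((((t %% n)%N == a)%:R) : int) = m%:R.
Proof.
move=> ha.
rewrite (eq_bigr (fun t : 'I_(m * n) => \sum_(b < m) ((((t : nat) == a + b * n)%N)%:R : int))); last first.
  by move=> t _; rewrite sum_delta.
rewrite exchange_big /= (eq_bigr (fun _ => 1)); last first.
  move=> b _; apply: sum_eq1.
  have : (b.+1 * n <= m * n)%N by rewrite leq_mul2r ltn_ord orbT.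
  rewrite mulSn; lia.
by rewrite sumr_const card_ord.
Qed.

Lemma PmPmT m n (n0 : (0 < n)%N) : Pm n (m * n) *m (Pm n (m * n))^T = (m%:R)%:M.
Proof.
apply/matrixP => a a'; rewrite !mxE.
rewrite (eq_bigr (fun t : 'I_(m * n) => (((t %% n)%N == a)%:R *
   ((a == a' :> nat)%:R) : int))); last first.
  move=> t _; rewrite !mxE; case: eqP => h1; case: eqP => h2; rewrite ?mulr0 ?mul0r //.
    by rewrite -h1 h2 eqxx.
  by case: eqP => h3; rewrite ?mulr0 //; exfalso; apply: h2; rewrite h1.
rewrite -big_distrl /= sum_mod //; case: eqP => h.
  by rewrite mulr1 (_ : a == a' = true) //; apply/eqP/val_inj.
by rewrite mulr0 (_ : a == a' = false) //; apply/negbTE/eqP => h'; apply: h; rewrite h'.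
Qed.

Section Blk.
Variable p : nat.
Hypothesis pP : prime p.

Lemma tot_pe e : totient (p ^ e.+1) = (p.-1 * p ^ e)%N.
Proof. by rewrite totient_pfactor. Qed.

Lemma pe_split e : (p ^ e.+1 = p ^ e + totient (p ^ e.+1))%N.
Proof.
rewrite tot_pe expnS; have := p_gt0 pP; case: p => // q _ /=; lia.
Qed.

Lemma A_block e (e1 : (p ^ e.+1 = p ^ e + totient (p ^ e.+1))%N)
  (e2 : (p ^ e.+1 = totient (p ^ e.+1) + p ^ e)%N) :
  castmx (e1, e2) (A_mat (p ^ e.+1)) =
  block_mx (A_mat (p ^ e) *m Pm (p ^ e) (totient (p ^ e.+1))) (A_mat (p ^ e))
           1%:M (- (Pm (p ^ e) (totient (p ^ e.+1)))^T).
Proof.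
have tot := tot_pe e; have hpe := pe_split e.
apply/matrixP => i j; rewrite castmxE A_matE.
case: (split_ordP i) => i' ->; case: (split_ordP j) => j' ->;
  rewrite ?block_mxEul ?block_mxEur ?block_mxEdl ?block_mxEdr /=.
- by rewrite (mulPm _ (pe_gt0 pP e)) A_matE /= aa_top.
- rewrite (A_matE i' j') aa_top // tot modnMDl modn_small //.
- have hi := ltn_ord i'; have hj := ltn_ord j'.
  rewrite aa_bot; [|lia|lia|lia].
  by rewrite hj addKn mxE.
- have hi := ltn_ord i'; have hj := ltn_ord j'.
  rewrite aa_bot; [|lia|lia|lia].
  rewrite ifF; last by lia.
  by rewrite addKn addKn !mxE.
Qed.
End Blk.

Lemma mequiv_scale (c : int) m1 m2 n1 n2 (M : 'M[int]_(m1,m2)) (N : 'M[int]_(n1,n2)) :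
  mequiv M N -> mequiv (c *: M) (c *: N).
Proof.
move=> [L [L' [R [R' [h1 h2 h3 h4 ->]]]]].
by exists L, L', R, R'; split=> //; rewrite scalemxAl scalemxAr.
Qed.

Lemma block_diag r n (d : seq int) (c : int) : size d = n ->
  block_mx (1%:M : 'M[int]_r) 0 0 (c *: diagl n d) =
  diagl (r + n) (nseq r 1 ++ map (fun x => c * x) d).
Proof.
move=> hs; apply/matrixP => i j.
case: (split_ordP i) => i' ->; case: (split_ordP j) => j' ->;
  rewrite ?block_mxEul ?block_mxEur ?block_mxEdl ?block_mxEdr !mxE /=;
  have hi := ltn_ord i'; have hj := ltn_ord j'.
- by rewrite nth_cat size_nseq hi nth_nseq hi.
- by rewrite (_ : (i' == r + j' :> nat) = false) ?mulr0n //; apply/negbTE; lia.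
- by rewrite (_ : (r + i' == j' :> nat) = false) ?mulr0n //; apply/negbTE; lia.
rewrite nth_cat size_nseq ifF; last by lia.
by rewrite addKn (nth_map 0) ?hs // eqn_add2l mulrnAr.
Qed.

Lemma PmPmT' n r m : (0 < n)%N -> r = (m * n)%N ->
  Pm n r *m (Pm n r)^T = (m%:R)%:M.
Proof. by move=> n0 ->; exact: PmPmT. Qed.

Section Ex.
Variable p : nat.
Hypothesis pP : prime p.

Fixpoint Dseq (e : nat) : seq int :=
  match e with
  | 0 => [:: 1]
  | e'.+1 => nseq (totient (p ^ e'.+1)) 1 ++ map (fun x => p%:Z * x) (Dseq e')
  end.

Lemma size_D e : size (Dseq e) = (p ^ e)%N.
Proof.
elim: e => [|e IH] //=.
by rewrite size_cat size_nseq size_map IH addnC -(pe_split pP e).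
Qed.

Lemma A_mat1 : A_mat 1 = diagl 1 [:: 1].
Proof.
apply/matrixP => i j; rewrite A_matE.
rewrite (ord1 i) (ord1 j) /aa mxE /=.
idtac.
rewrite /= modp_small ?size_Cyclotomic //= expr0 ?coefC //.
by rewrite size_polyC.
Qed.

Lemma exist_main e : mequiv (A_mat (p ^ e)) (diagl (p ^ e) (Dseq e)).
Proof.
elim: e => [|e IH]; first by rewrite expn0 A_mat1; exact: mequiv_refl.
have e1 := pe_split pP e.
have e2 : (p ^ e.+1 = totient (p ^ e.+1) + p ^ e)%N by rewrite addnC.
rewrite -(castmxK e1 e2 (A_mat _)) (A_block pP).
apply: mequiv_trans (mequiv_cast _ _ _) _.
have hP : Pm (p ^ e) (totient (p ^ e.+1)) *m (Pm (p ^ e) (totient (p ^ e.+1)))^T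
   = (p%:Z - 1)%:M.
  rewrite (PmPmT' (pe_gt0 pP e) (tot_pe pP e)); congr (_%:M).
  by rewrite -[in RHS](prednK (p_gt0 pP)) -addn1 PoszD addrK natz.
apply: mequiv_trans (mequiv_M0 _ hP) _.
apply: mequiv_trans (mequiv_block _ (mequiv_scale p%:Z IH)) _.
rewrite block_diag ?size_D //.
apply: mequiv_sym.
have -> : diagl (p ^ e.+1) (Dseq e.+1) =
   castmx (esym e2, esym e2) (diagl (totient (p ^ e.+1) + p ^ e) (Dseq e.+1)).
  by apply/matrixP => i j; rewrite castmxE !mxE.
exact: mequiv_cast.
Qed.

End Ex.

Lemma count_dvd1 m1 : (0 < m1)%N -> count (fun x => m1 %| x)%N (iota 0 m1) = 1%N.
Proof.
case: m1 => // m1 _ /=; rewrite -[RHS]addn0; congr (_ + _)%N.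
apply/eqP; rewrite -leqn0 leqNgt -has_count; apply/hasPn => x; rewrite mem_iota => hx /=.
apply/negP => /dvdn_leq; lia.
Qed.

Lemma count_mult g m1 : (0 < m1)%N ->
  count (fun x => m1 %| x)%N (iota 0 (g * m1)) = g.
Proof.
move=> m0; elim: g => [|g IH]; first by rewrite mul0n.
rewrite mulSn addnC iotaD count_cat IH add0n -[X in iota X m1](addn0 (g * m1)) iotaDl count_map.
rewrite (@eq_count _ _ (fun x => m1 %| x)%N); last first.
  by move=> x /=; rewrite dvdn_addr // dvdn_mull.
by rewrite count_dvd1 // addn1.
Qed.

Lemma count_ann n m : (0 < m)%N ->
  count (fun x => m %| n * x)%N (iota 0 m) = gcdn n m.
Proof.
move=> m0; have g0 : (0 < gcdn n m)%N by rewrite gcdn_gt0 m0 orbT.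
have [n1 hn] : exists n1, n = (gcdn n m * n1)%N.
  by exists (n %/ gcdn n m)%N; rewrite mulnC divnK ?dvdn_gcdl.
have [m1 hm] : exists m1, m = (gcdn n m * m1)%N.
  by exists (m %/ gcdn n m)%N; rewrite mulnC divnK ?dvdn_gcdr.
have m10 : (0 < m1)%N by move: m0; rewrite hm muln_gt0 => /andP[].
have co : coprime m1 n1.
  by rewrite /coprime -(eqn_pmul2l g0) muln1 muln_gcdr -hn -hm gcdnC.
set g := gcdn n m in g0 hn hm *.
rewrite -(count_mult g m10) -hm; apply: eq_count => x /=.
by rewrite {1}hm {1}hn -mulnA dvdn_pmul2l // Gauss_dvdr.
Qed.

Section K.
Variable m' : nat.
Local Notation m := m'.+2.
Local Notation fZ := (intr : int -> 'Z_m).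

Definition kset k (D : 'M[int]_k) : {set 'cV['Z_m]_k} :=
  [set v | map_mx fZ D *m v == 0].

Lemma kset_equiv k (D1 D2 L L' R R' : 'M[int]_k) :
  L' *m L = 1%:M -> R' *m R = 1%:M ->
  D1 = L *m D2 *m R -> #|kset D1| = #|kset D2|.
Proof.
move=> hL hR ->.
have -> : kset (L *m D2 *m R) = (fun v => map_mx fZ R *m v) @^-1: kset D2.
  apply/setP => v; rewrite !inE !map_mxM -!mulmxA.
  apply/eqP/eqP => [h | ->]; last by rewrite mulmx0.
  by rewrite -[LHS]mul1mx -(map_mx1 fZ) -hL map_mxM -mulmxA h mulmx0.
apply: card_preimset => v w h.
have := congr1 (mulmx (map_mx fZ R')) h.
by rewrite !mulmxA -map_mxM hR map_mx1 !mul1mx.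
Qed.

Lemma card_ann n : #|[pred x : 'Z_m | n%:R * x == 0]| = gcdn n m.
Proof.
rewrite cardE /enum_mem size_filter -enumT.
rewrite -count_ann // -val_enum_ord count_map.
have E : forall x : 'Z_m, (n%:R * x == 0) = (m %| n * x)%N.
  by move=> x; rewrite -val_eqE /= val_Zp_nat // /dvdn modnMml.
exact: (eq_count E).
Qed.

Lemma kset_diag k (d : seq int) : all (fun x => 0 <= x) d ->
  #|kset (diagl k d)| = (\prod_(i < k) gcdn (absz (d`_i)%R) m)%N.
Proof.
move=> hd.
pose S (i : 'I_k) := [pred x : 'Z_m | fZ d`_i * x == 0].
pose phi (v : 'cV['Z_m]_k) : {ffun 'I_k -> 'Z_m} := [ffun i => v i 0].
have phi_inj : injective phi.
  move=> v w h; apply/matrixP => i j; rewrite (ord1 j).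
  by have := congr1 (fun f : {ffun 'I_k -> 'Z_m} => f i) h; rewrite !ffunE.
have entry : forall (v : 'cV['Z_m]_k) (i : 'I_k), (map_mx fZ (diagl k d) *m v) i 0 = fZ d`_i * v i 0.
  move=> v i; rewrite mxE (bigD1 i) //= !mxE eqxx mulr1n big1 ?addr0 //.
  move=> j hj; rewrite !mxE (_ : (i == j :> nat) = false) ?mulr0n ?rmorph0 ?mul0r //.
  by apply/negbTE; apply: contra hj => /eqP h; apply/eqP/val_inj.
rewrite -(card_imset _ phi_inj).
have -> : phi @: kset (diagl k d) = [set f in family S].
  apply/setP => f; rewrite inE; apply/imsetP/familyP.
  - case=> v; rewrite inE => /eqP hv -> i; rewrite ffunE /S inE -entry hv mxE //.
  - move=> hf; exists (\col_i f i).
      rewrite inE; apply/eqP/matrixP => i j; rewrite (ord1 j) entry !mxE.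
      by apply/eqP; have := hf i.
    by apply/ffunP => i; rewrite ffunE mxE.
rewrite cardsE card_family foldrE big_map big_enum /=.
apply: eq_big => // i _.
have -> : d`_i = (absz d`_i)%:Z.
  case: (ltnP i (size d)) => h; last by rewrite nth_default.
  by rewrite abszE ger0_norm //; apply: (all_nthP 0 hd).
rewrite -(card_ann (absz d`_i)); apply: eq_card => x //.
Qed.

End K.

Section V.
Variable p : nat.
Hypothesis pP : prime p.

Definition pw (v : nat) : int := (p ^ v)%N%:Z.

Fixpoint Vseq (e : nat) : seq nat :=
  match e with
  | 0 => [:: 0%N]
  | e'.+1 => nseq (totient (p ^ e'.+1)) 0%N ++ map S (Vseq e')
  end.

Lemma DseqE e : Dseq p e = map pw (Vseq e).
Proof.
elim: e => [|e IH] //=; rewrite IH map_cat map_nseq -map_comp; congr (_ ++ _).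
rewrite -map_comp; apply: eq_map => v /=; by rewrite /pw expnS PoszM.
Qed.

Lemma Vseq_le e : all (fun v => v <= e)%N (Vseq e).
Proof.
elim: e => [|e IH] //=; rewrite all_cat all_nseq /= all_map.
by rewrite orbT /=; apply: sub_all IH => v /=.
Qed.

Lemma Vseq_count e t : (t <= e)%N -> count (pred1 t) (Vseq e) = totient (p ^ (e - t)).
Proof.
elim: e t => [|e IH] [|t] //= ht.
- rewrite count_cat count_nseq /= mul1n count_map.
  by rewrite (@eq_count _ _ pred0) ?count_pred0 ?addn0 ?subn0.
- rewrite count_cat count_nseq /= mul0n add0n count_map subSS -IH //.
Qed.

Lemma sorted_Vseq e : sorted leq (Vseq e).
Proof.
elim: e => [|e IH] //=.
elim: (totient _) => [|n IHn] /=.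
  by rewrite sorted_map.
by rewrite path_min_sorted //; apply/allP.
Qed.

Lemma Dseq_props e : [/\ size (Dseq p e) = (p ^ e)%N, all (fun x => 0 <= x) (Dseq p e)
   & sorted (fun a b => (a %| b)%Z) (Dseq p e)].
Proof.
split; first exact: size_D.
  by rewrite DseqE all_map; apply/allP.
rewrite DseqE sorted_map; apply: sub_sorted (sorted_Vseq e) => a b /= hab.
by rewrite /pw; apply: dvdn_exp2l.
Qed.

End V.

Definition Gf (d : seq int) (m : nat) : nat := (\prod_(x <- d) gcdn (absz x) m)%N.

Lemma prod_seq n (d : seq int) (F : int -> nat) : size d = n ->
  (\prod_(i < n) F (d`_i)%R)%N = (\prod_(x <- d) F x)%N.
Proof.
move<-; elim: d => [|x d IH]; first by rewrite big_ord0 big_nil.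
by rewrite big_ord_recl big_cons /= -IH.
Qed.

Lemma G_eq k (d1 d2 : seq int) (L L' R R' : 'M[int]_k) :
  size d1 = k -> size d2 = k -> all (fun x => 0 <= x) d1 -> all (fun x => 0 <= x) d2 ->
  L' *m L = 1%:M -> R' *m R = 1%:M -> diagl k d1 = L *m diagl k d2 *m R ->
  forall m, (1 < m)%N -> Gf d1 m = Gf d2 m.
Proof.
move=> s1 s2 a1 a2 hL hR hD [|[|m']] // _.
have := kset_equiv m' hL hR hD.
rewrite !kset_diag // /Gf.
by rewrite (prod_seq (fun x => gcdn (absz x) m'.+2) s1) (prod_seq (fun x => gcdn (absz x) m'.+2) s2).
Qed.

Lemma Gf_dvd d m x : x \in d -> (gcdn (absz x) m %| Gf d m)%N.
Proof. by move=> hx; rewrite /Gf (big_rem x hx) /= dvdn_mulr. Qed.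

Lemma gcd_pow p a b : (gcdn (p ^ a) (p ^ b) = p ^ minn a b)%N.
Proof.
case: (leqP a b) => h.
  by apply/gcdn_idPl; apply: dvdn_exp2l.
by apply/gcdn_idPr; apply: dvdn_exp2l; apply: ltnW.
Qed.

Section U.
Variable p : nat.
Hypothesis pP : prime p.

Lemma Gf_pow vs j : Gf (map (pw p) vs) (p ^ j) = (p ^ sumn (map (minn^~ j) vs))%N.
Proof.
rewrite /Gf big_map sumnE big_map expn_sum; apply: eq_bigr => v _.
by rewrite /pw /= gcd_pow.
Qed.

Lemma Gf_q vs q : prime q -> q != p -> Gf (map (pw p) vs) q = 1%N.
Proof.
move=> qP qp; rewrite /Gf big_map big1_seq // => v _ /=.
apply/eqP; rewrite -/(coprime _ _); apply: coprimeXl; rewrite prime_coprime //.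
by rewrite dvdn_prime2 // eq_sym.
Qed.

Lemma is_pow1 (d : seq int) vs : all (fun x => 0 <= x) d ->
  (forall q, prime q -> q != p -> Gf d q = Gf (map (pw p) vs) q) ->
  forall x, x \in d -> x = pw p (logn p (absz x)).
Proof.
move=> hd hG x hx.
have hq : forall q, prime q -> q != p -> ~~ (q %| absz x)%N.
  move=> q qP qp; apply/negP => hqx.
  have := Gf_dvd q hx; rewrite hG // Gf_q // (gcdn_idPr hqx) dvdn1 => /eqP hq1.
  by move: qP; rewrite hq1.
have x0 : (0 < absz x)%N.
  rewrite lt0n; apply/negP => /eqP h0.
  pose q0 := (if p == 2 then 3 else 2)%N.
  have q0P : prime q0 by rewrite /q0; case: ifP.
  have q0p : q0 != p.
    rewrite /q0; case: ifP => [/eqP -> // | /eqP h].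
    by apply/eqP => h2; apply: h; rewrite -h2.
  by have := hq q0 q0P q0p; rewrite h0 dvdn0.
have [c cp hc] := pfactor_coprime pP x0.
have c1 : c = 1%N.
  have c0 : (0 < c)%N by move: x0; rewrite hc muln_gt0 => /andP[].
  case: (ltngtP c 1) => // h; first lia.
  have qP := pdiv_prime h.
  have qc := pdiv_dvd c.
  have : pdiv c == p.
    apply/negPn/negP => qp; have := hq _ qP qp; rewrite hc.
    by rewrite dvdn_mulr.
  move/eqP => qp; move: cp; rewrite prime_coprime // -qp qc.
  by [].
have hxn : 0 <= x by move/allP: hd; apply.
rewrite /pw; move: hc; rewrite c1 mul1n => <-; by rewrite abszE ger0_norm.
Qed.

Lemma is_pow (d : seq int) vs : all (fun x => 0 <= x) d ->
  (forall q, prime q -> q != p -> Gf d q = Gf (map (pw p) vs) q) ->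
  d = map (pw p) (map (fun x => logn p (absz x)) d).
Proof.
move=> hd hG; rewrite -map_comp -[LHS]map_id; apply/eq_in_map => x hx /=.
exact: is_pow1 hd hG x hx.
Qed.

End U.

Lemma sum_minS (vs : seq nat) j :
  sumn (map (minn^~ j.+1) vs) = (sumn (map (minn^~ j) vs) + count (fun v => j < v) vs)%N.
Proof.
elim: vs => //= v vs ->; case: (ltnP j v) => h /=; lia.
Qed.

Lemma sum_min0 (vs : seq nat) : sumn (map (minn^~ 0%N) vs) = 0%N.
Proof. by elim: vs => //= v vs ->; rewrite minn0. Qed.

Lemma count_split (vs : seq nat) t :
  count (fun v => t <= v)%N vs = (count (pred1 t) vs + count (fun v => t < v)%N vs)%N.
Proof.
elim: vs => //= v vs ->; case: (ltngtP t v) => h /=; lia.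
Qed.

Lemma counts_eq (vs ws : seq nat) : size vs = size ws ->
  (forall j, sumn (map (minn^~ j) vs) = sumn (map (minn^~ j) ws)) ->
  forall t, count (pred1 t) vs = count (pred1 t) ws.
Proof.
move=> hs hsum.
have hc : forall j, count (fun v => j < v)%N vs = count (fun v => j < v)%N ws.
  by move=> j; apply/eqP; rewrite -(eqn_add2l (sumn (map (minn^~ j) vs))) {2}hsum
      -!sum_minS hsum.
have hle : forall t, count (fun v => t <= v)%N vs = count (fun v => t <= v)%N ws.
  case=> [|t]; last exact: hc.
  by rewrite !(@eq_count _ _ predT) ?count_predT.
move=> t; have := count_split vs t; have := count_split ws t.
have := hle t; have := hc t; lia.
Qed.

Unset Implicit Arguments.

Theorem theorem2p6 (p e : nat) : prime p -> (0 < e)%N ->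
  (exists d, is_elem_divisors (A_mat (p ^ e)) d) /\
  (forall d : seq int, is_elem_divisors (A_mat (p ^ e)) d ->
     (forall x, x \in d -> exists2 i : nat, (i <= e)%N & x = (p ^ i)%:Z) /\
     (forall i : nat, (i <= e)%N ->
        count (pred1 (p ^ i)%:Z) d = totient (p ^ (e - i)))).
Proof.
move=> pP _.
have [L0 [L0' [R0 [R0' [h1 h2 h3 h4 hA]]]]] := exist_main pP e.
have [sD aD soD] := Dseq_props pP e.
split.
  exists (Dseq p e); split => //.
  exists L0; first by have [] := mulmx1_unit h1.
  exists R0; first by have [] := mulmx1_unit h3.
  exact: hA.
move=> d [sd ad _ [L hL [R hR hAd]]].
have hD0 : diagl (p ^ e) d = invmx L *m A_mat (p ^ e) *m invmx R.
  by rewrite hAd !mulmxA mulVmx // mul1mx -mulmxA mulmxV // mulmx1.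
have hD : diagl (p ^ e) d =
    (invmx L *m L0) *m diagl (p ^ e) (Dseq p e) *m (R0 *m invmx R).
  by rewrite hD0 hA !mulmxA.
have hL' : (L0' *m L) *m (invmx L *m L0) = 1%:M.
  by rewrite mulmxA -(mulmxA L0') mulmxV // mulmx1 h2.
have hR' : (R *m R0') *m (R0 *m invmx R) = 1%:M.
  by rewrite mulmxA -(mulmxA R) h4 mulmx1 mulmxV.
have hG := G_eq sd sD ad aD hL' hR' hD.
rewrite (DseqE p e) in hG.
have hx := is_pow1 pP ad (fun q qP _ => hG q (prime_gt1 qP)).
have hd := is_pow pP ad (fun q qP _ => hG q (prime_gt1 qP)).
set vs := map (fun x => logn p (absz x)) d in hd.
have hsum : forall j, sumn (map (minn^~ j) vs) = sumn (map (minn^~ j) (Vseq p e)).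
  case=> [|j]; first by rewrite !sum_min0.
  have hp1 : (1 < p ^ j.+1)%N by rewrite -{1}(expn0 p) ltn_exp2l // prime_gt1.
  have := hG _ hp1; rewrite {1}hd !Gf_pow.
  exact: (expnI (prime_gt1 pP)).
have hs : size vs = size (Vseq p e).
  by rewrite size_map sd -(size_map (pw p)) -(DseqE p e) sD.
have hcnt := counts_eq hs hsum.
split.
  move=> x xd; exists (logn p (absz x)); last exact: hx.
  case: (leqP (logn p (absz x)) e) => // hlt; exfalso.
  set v := logn p (absz x) in hlt.
  have : (0 < count (pred1 v) vs)%N.
    rewrite -has_count; apply/hasP; exists v; last by rewrite /= eqxx.
    rewrite /vs /v; exact: (map_f (fun y : int => logn p `|y|) xd).
  rewrite hcnt -has_count => /hasP [w hw /= /eqP hwv].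
  by move/allP: (Vseq_le p e) => /(_ w hw) /=; lia.
move=> i hi; rewrite hd count_map -(Vseq_count p hi) -hcnt.
apply: eq_count => v /=; apply/eqP/eqP => [h|->] //.
apply: (expnI (prime_gt1 pP)); by case: h.
Qed.
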